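(* Let $G'=(V,E')$ be a simple undirected loop-free graph with $V=\{1,\ldots,n\}$, let each pair $\{i,j\}$ of distinct nodes have a cost $c_{ij}\ge0$, let $B\ge0$, and for each $i\in V$ let $D_i=\{L_i,L_i+1,\ldots,R_i\}\subseteq\{0,\ldots,n-1\}$ be a nonempty interval. Let $H$ be the weighted graph constructed from these data as described in the context. Then $H$ has a perfect matching of total cost at most $B$ if and only if there is an edge set $E$ on $V$ with $\sum_{e\in E\triangle E'}c_e\le B$ such that in $(V,E)$ every node $i$ has degree in $D_i$.
   Context: Write $d_i$ for the degree of $i$ in $G'$. The graph $H$ is built as follows. (a) For each edge $e=\{i,i'\}\in E'$ add two nodes $y^-_{e,i},y^-_{e,i'}$ joined by an edge; for each non-edge pair $e=\{i,i'\}\notin E'$ ($i\ne i'$) add two nodes $y^+_{e,i},y^+_{e,i'}$ joined by an edge. (b) For each $i\in V$ add a set $X^+_i$ of $\min(R_i,n-d_i-1)$ nodes and a set $X^-_i$ of $\min(n-L_i-1,d_i)$ nodes; join every node of $X^+_i$ to every $y^+_{e,i}$ (over all non-edges $e$ at $i$), every node of $X^-_i$ to every $y^-_{e,i}$ (over all edges $e$ at $i$), and every node of $X^+_i$ to every node of $X^-_i$. (c) Let $\sigma_i=d_i+|X^+_i|-|X^-_i|$ (one has $L_i\le\sigma_i\le R_i$). Add a set $Z^+_i$ of $\sigma_i-L_i$ nodes joined completely to $X^+_i$, and a set $Z^-_i$ of $R_i-\sigma_i$ nodes joined completely to $X^-_i$. Add all edges among the union of all $Z^+_i,Z^-_i$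 over all $i$ (a complete graph). If the total number of nodes so far is odd, add one extra node $\hat z$ adjacent to all nodes of all $Z^+_i,Z^-_i$. (d) Costs: for each $e=\{i,i'\}\in E'$, each edge between $y^-_{e,i}$ and a node of $X^-_i$ and between $y^-_{e,i'}$ and a node of $X^-_{i'}$ has cost $c_e/2$; for each $e=\{i,i'\}\notin E'$, each edge between $y^+_{e,i}$ and a node of $X^+_i$ and between $y^+_{e,i'}$ and a node of $X^+_{i'}$ has cost $c_e/2$; all other edges of $H$ have cost $0$. The cost of a matching is the sum of the costs of its edges. For edge sets, $c_{ij}$ is the cost of removing $\{i,j\}$ if it lies in $E'$ and of adding it otherwise; $E\triangle E'$ is the symmetric difference. *)

(* Defs.v *)
From HB Require Import structures.
From mathcomp Require Import all_boot all_order all_algebra.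
Set Implicit Arguments. Unset Strict Implicit. Unset Printing Implicit Defensive.
Import Order.TTheory GRing.Theory Num.Theory.

(* Nodes of G' are 'I_n (i.e. {0..n-1} standing for {1..n}).
   A simple graph on 'I_n is a symmetric irreflexive relation. *)
Definition simple_graph (n : nat) (E : rel 'I_n) : Prop :=
  (forall i j, E i j = E j i) /\ (forall i, ~~ E i i).

Definition deg (n : nat) (E : rel 'I_n) (i : 'I_n) : nat := #|[set j | E i j]|.

Definition kY  : 'I_5 := @Ordinal 5 0 isT.
Definition kXp : 'I_5 := @Ordinal 5 1 isT.
Definition kXm : 'I_5 := @Ordinal 5 2 isT.
Definition kZp : 'I_5 := @Ordinal 5 3 isT.
Definition kZm : 'I_5 := @Ordinal 5 4 isT.

Section Construction.
Variable n : nat.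
Variable E' : rel 'I_n.
Variables lo hi : 'I_n -> nat.    (* D_i = {lo i, ..., hi i} *)

Definition dG (i : 'I_n) : nat := deg E' i.
Definition nXp (i : 'I_n) : nat := minn (hi i) (n - dG i - 1).
Definition nXm (i : 'I_n) : nat := minn (n - lo i - 1) (dG i).
Definition sigma (i : 'I_n) : nat := dG i + nXp i - nXm i.
Definition nZp (i : 'I_n) : nat := sigma i - lo i.
Definition nZm (i : 'I_n) : nat := hi i - sigma i.

(* Some (t, i, k) encodes:
     t = kY  : the node y_{e,i} for e = {i,k} (i <> k); it is y^-_{e,i} if
               {i,k} \in E' and y^+_{e,i} otherwise;
     t = kXp : the k-th node of X^+_i  (k < |X^+_i|);
     t = kXm : the k-th node of X^-_i  (k < |X^-_i|);
     t = kZp : the k-th node of Z^+_i  (k < |Z^+_i|);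
     t = kZm : the k-th node of Z^-_i  (k < |Z^-_i|);
   None encodes the extra node \hat z. *)
Definition node : finType := option ('I_5 * 'I_n * 'I_n).

Definition base (v : node) : bool :=
  match v with
  | None => false
  | Some (t, i, k) =>
      if t == kY then i != k
      else if t == kXp then (k < nXp i)%N
      else if t == kXm then (k < nXm i)%N
      else if t == kZp then (k < nZp i)%N
      else (k < nZm i)%N
  end.

Definition hatz : bool := odd #|[pred v : node | base v]|.

Definition inH (v : node) : bool := if v is Some _ then base v else hatz.

Definition isZ (t : 'I_5) : bool := (t == kZp) || (t == kZm).

(* one-directional description of the edges of H *)
Definition adj0 (u v : node) : bool :=
  match u, v with
  | Some (t, i, k), Some (s, j, l) =>
      [|| [&& t == kY, s == kY, i == l & k == j],      (* y_{e,i} -- y_{e,i'} *)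
          [&& t == kXp, s == kY, j == i & ~~ E' i l],
          [&& t == kXm, s == kY, j == i & E' i l],
          [&& t == kXp, s == kXm & j == i],
          [&& t == kZp, s == kXp & j == i],
          [&& t == kZm, s == kXm & j == i]
        | isZ t && isZ s]
  | None, Some (s, _, _) => isZ s
  | _, _ => false
  end.

Definition adjH (u v : node) : bool :=
  [&& inH u, inH v, u != v & adj0 u v || adj0 v u].

Section Costs.
Variable R : realFieldType.
Variable c : 'I_n -> 'I_n -> R.

Definition cost0 (u v : node) : R :=
  match u, v with
  | Some (t, i, _), Some (s, j, l) =>
      if [&& (t == kXp) || (t == kXm), s == kY & j == i] then (c i l / 2)%R
      else 0%R
  | _, _ => 0%R
  end.

Definition costH (u v : node) : R :=
  if adjH u v then (cost0 u v + cost0 v u)%R else 0%R.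

(* cost of an edge given as a 2-element set {u,v}: equals costH u v *)
Definition edge_cost (e : {set node}) : R :=
  (\sum_(u in e) \sum_(v in e | u != v) costH u v / 2)%R.

Definition matching_cost (M : {set {set node}}) : R :=
  (\sum_(e in M) edge_cost e)%R.

Definition edit_cost (E : rel 'I_n) : R :=
  (\sum_(i < n) \sum_(j < n | (i < j)%N && (E i j != E' i j)) c i j)%R.

End Costs.

Definition perfect_matching (M : {set {set node}}) : Prop :=
  (forall e, e \in M -> exists u v, adjH u v /\ e = [set u; v]) /\
  (forall v, inH v -> #|[set e in M | v \in e]| = 1%N).

End Construction.

(* Main.v *)
Require Import Defs.
From HB Require Import structures.
From mathcomp Require Import all_boot all_order all_algebra.
From mathcomp Require Import zify.
Import Order.TTheory GRing.Theory Num.Theory.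
Set Implicit Arguments. Unset Strict Implicit. Unset Printing Implicit Defensive.

Variant ord5_spec : 'I_5 -> Type :=
 | O5Y : ord5_spec kY | O5Xp : ord5_spec kXp | O5Xm : ord5_spec kXm
 | O5Zp : ord5_spec kZp | O5Zm : ord5_spec kZm.

Lemma ord5P t : ord5_spec t.
Proof.
case: t => [[|[|[|[|[|t]]]]] Ht] //.
- have -> : Ordinal Ht = kY by apply: val_inj.
  exact: O5Y.
- have -> : Ordinal Ht = kXp by apply: val_inj.
  exact: O5Xp.
- have -> : Ordinal Ht = kXm by apply: val_inj.
  exact: O5Xm.
- have -> : Ordinal Ht = kZp by apply: val_inj.
  exact: O5Zp.
- have -> : Ordinal Ht = kZm by apply: val_inj.
  exact: O5Zm.
Qed.

Lemma sum_opt (T : finType) (R : Type) (idx : R) (op : Monoid.com_law idx) (F : option T -> R) :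
  \big[op/idx]_(v : option T) F v = op (F None) (\big[op/idx]_(x : T) F (Some x)).
Proof.
rewrite [LHS](perm_big (None :: map Some (enum T))).
  by rewrite big_cons big_map big_enum.
apply: uniq_perm; first exact: index_enum_uniq.
  rewrite /= map_inj_uniq ?enum_uniq ?andbT; last by move=> x y [].
  by apply/mapP=> [[]].
case=> [x|]; rewrite mem_index_enum /= ?in_cons /=; last by [].
by rewrite (mem_map (@Some_inj _)) mem_enum.
Qed.

Lemma sum_node (m : nat) (R : Type) (idx : R) (op : Monoid.com_law idx) (F : node m -> R) :
  \big[op/idx]_(v : node m) F v =
  op (F None) (\big[op/idx]_(t : 'I_5) \big[op/idx]_(i : 'I_m) \big[op/idx]_(k : 'I_m) F (Some (t, i, k))).
Proof.
rewrite sum_opt; congr (op _ _).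
rewrite pair_big /= pair_big /=; by apply: eq_bigr => [[[t i] k]] _.
Qed.

Lemma sum_loc (m : nat) (R : Type) (idx : R) (op : Monoid.com_law idx) (F : node m -> R) t0 i0 :
  (forall v, ~~ (if v is Some (t, i, _) then (t == t0) && (i == i0) else false) -> F v = idx) ->
  \big[op/idx]_(v : node m) F v = \big[op/idx]_(k : 'I_m) F (Some (t0, i0, k)).
Proof.
move=> HF; rewrite sum_node HF // Monoid.mul1m (bigD1 t0) //=.
rewrite [X in op _ X]big1 ?Monoid.mulm1; last first.
  move=> t Ht; apply: big1 => i _; apply: big1 => k _; apply: HF; by rewrite (negPf Ht).
rewrite (bigD1 i0) //= [X in op _ X]big1 ?Monoid.mulm1 //.
move=> i Hi; apply: big1 => k _; apply: HF; by rewrite eqxx (negPf Hi).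
Qed.

Lemma sum_ord_lt m N : \sum_(k < m) (k < N : nat) = minn N m.
Proof.
elim: m => [|m IH]; first by rewrite big_ord0 minn0.
rewrite big_ord_recr /= IH; case: ltnP => H; lia.
Qed.

Lemma deg_le m (E : rel 'I_m) i : (forall j, ~~ E j j) -> deg E i <= m.-1.
Proof.
move=> Hirr; rewrite /deg; have <- : #|[set~ i]| = m.-1 by rewrite cardsC1 card_ord.
apply: subset_leq_card.
apply/subsetP=> j; rewrite !inE => Hij; apply/eqP=> Hji; subst j; by have := Hirr i; rewrite Hij.
Qed.

Lemma size_filter_sum n (P : pred 'I_n) : size [seq l <- enum 'I_n | P l] = \sum_(l < n) (P l : nat).
Proof.
rewrite size_filter -sum1_count big_mkcond /=.
rewrite big_enum /=. by apply: eq_bigr => l _; case: (P l).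
Qed.
Lemma card_sum (T : finType) (P : pred T) : #|[set v | P v]| = \sum_(v : T) (P v : nat).
Proof. rewrite -sum1_card big_mkcond /=; apply: eq_bigr => v _; rewrite inE; by case: (P v). Qed.
Lemma card_sum' (T : finType) (P : pred T) : #|[pred v | P v]| = \sum_(v : T) (P v : nat).
Proof. rewrite -sum1_card big_mkcond /=; apply: eq_bigr => v _; rewrite inE; by case: (P v). Qed.
Lemma even_inv (T : finType) (f : T -> T) (S : {set T}) :
  (forall x, x \in S -> f x \in S /\ f (f x) = x /\ f x != x) -> ~~ odd #|S|.
Proof.
move=> H; have [N HN] : exists N, #|S| = N by eexists.
rewrite HN; elim/ltn_ind: N S HN H => N IH S HN H.
case: (set_0Vmem S) => [S0|[x Hx]]; first by rewrite -HN S0 cards0.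
have [Hfx [Hffx Hneq]] := H x Hx.
set S' := S :\ x :\ f x.
have HS : #|S| = #|S'|.+2.
  rewrite (cardsD1 x) Hx (cardsD1 (f x) (S :\ x)) !inE Hneq Hfx /=; by [].
have Hlt : #|S'| < N by rewrite -HN HS.
have := IH _ Hlt S' erefl.
rewrite -HN HS /= negbK => H'; rewrite H' //.
move=> y; rewrite !inE => /and3P [Hy1 Hy2 Hy3].
have [Hfy [Hffy Hney]] := H y Hy3.
split; last by split.
rewrite Hfy andbT; apply/andP; split.
  by apply: contra Hy2 => /eqP Hfyf; rewrite -Hffy Hfyf Hffx.
by apply: contra Hy1 => /eqP Hfyx; rewrite -Hffy Hfyx.
Qed.

Definition pidx j := if odd j then j.-1 else j.+1.

Lemma pair_seq (T : eqType) (s : seq T) x : uniq s -> ~~ odd (size s) -> x \in s ->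
  let y := nth x s (pidx (index x s)) in
  [/\ y \in s, y != x & nth y s (pidx (index y s)) = x].
Proof.
move=> Hu Hev Hx /=.
set j := index x s.
have Hj : j < size s by rewrite index_mem.
have Hj' : pidx j < size s.
  rewrite /pidx; case: ifP => Ho; first lia.
  have : j.+1 != size s by apply: contraNneq Hev => <-; rewrite /= Ho.
  lia.
have Hidx : index (nth x s (pidx j)) s = pidx j by rewrite index_uniq.
split.
- exact: mem_nth.
- apply/eqP => Heq; move: Hidx; rewrite Heq -/j /pidx; case: ifP => Ho; lia.
- rewrite Hidx.
  have -> : pidx (pidx j) = j.
    rewrite /pidx; case Ho: (odd j) => /=.
      have -> : odd j.-1 = false by rewrite -(odd_halfK Ho) odd_double.
      have : j != 0 by apply: contraTneq Ho => ->.
      lia.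
    by rewrite Ho.
  exact: nth_index.
Qed.

Section S.
Variables (n : nat) (E' : rel 'I_n) (lo hi : 'I_n -> nat).
Hypothesis E'sg : simple_graph E'.

Local Notation node := (node n).
Local Notation inH := (inH E' lo hi).
Local Notation adjH := (adjH E' lo hi).
Local Notation adj0 := (adj0 E').
Local Notation nXp := (nXp E' hi).
Local Notation nXm := (nXm E' lo).
Local Notation nZp := (nZp E' lo hi).
Local Notation nZm := (nZm E' lo hi).

Definition Yn i l : node := Some (kY, i, l).
Definition Xpn i k : node := Some (kXp, i, k).
Definition Xmn i k : node := Some (kXm, i, k).
Definition Zpn i k : node := Some (kZp, i, k).
Definition Zmn i k : node := Some (kZm, i, k).

Lemma inH_Y i l : inH (Yn i l) = (i != l). Proof. by []. Qed.
Lemma inH_Xp i k : inH (Xpn i k) = (k < nXp i). Proof. by []. Qed.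
Lemma inH_Xm i k : inH (Xmn i k) = (k < nXm i). Proof. by []. Qed.
Lemma inH_Zp i k : inH (Zpn i k) = (k < nZp i). Proof. by []. Qed.
Lemma inH_Zm i k : inH (Zmn i k) = (k < nZm i). Proof. by []. Qed.

Lemma adjHC u v : adjH u v = adjH v u.
Proof. by rewrite /adjH eq_sym orbC; case: (inH u); case: (inH v). Qed.

Lemma adjH_neq u v : adjH u v -> u != v.
Proof. by case/and4P. Qed.
Lemma adjH_inl u v : adjH u v -> inH u.
Proof. by case/and4P. Qed.
Lemma adjH_inr u v : adjH u v -> inH v.
Proof. by case/and4P. Qed.

Lemma adj_Y i l w : adjH (Yn i l) w ->
  w = Yn l i \/ (exists k, w = Xpn i k /\ ~~ E' i l) \/ (exists k, w = Xmn i k /\ E' i l).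
Proof.
case/and4P=> _ _ _.
case: w => [[[s j] k]|] //=.
case: (ord5P s) => /=.
- by rewrite !orbF => /orP [] /andP [/eqP -> /eqP ->]; left.
- by rewrite orbF => /andP [/eqP <- H]; right; left; exists k.
- by rewrite orbF => /andP [/eqP <- H]; right; right; exists k.
- by [].
- by [].
Qed.

Lemma adj_Xp i k w : adjH (Xpn i k) w ->
  (exists l, w = Yn i l /\ ~~ E' i l) \/ (exists k', w = Xmn i k') \/ (exists k', w = Zpn i k').
Proof.
case/and4P=> _ _ _.
case: w => [[[s j] l]|] //=.
case: (ord5P s) => /=.
- by rewrite !orbF => /andP [/eqP -> H]; left; exists l.
- by [].
- by rewrite !orbF => /eqP ->; right; left; exists l.
- by move=> /orP [/eqP <-|//]; right; right; exists l.
- by [].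
Qed.

Lemma adj_Xm i k w : adjH (Xmn i k) w ->
  (exists l, w = Yn i l /\ E' i l) \/ (exists k', w = Xpn i k') \/ (exists k', w = Zmn i k').
Proof.
case/and4P=> _ _ _.
case: w => [[[s j] l]|] //=.
case: (ord5P s) => /=.
- by rewrite !orbF => /andP [/eqP -> H]; left; exists l.
- by move=> /orP [/eqP <-|//]; right; left; exists l.
- by [].
- by [].
- by move=> /orP [/eqP <-|//]; right; right; exists l.
Qed.

Hypothesis Hlh : forall i, lo i <= hi i <= n.-1.

Lemma dG_le i : dG E' i <= n.-1.
Proof. by apply: deg_le; case: E'sg. Qed.

Lemma sigma_bounds i : lo i <= sigma E' lo hi i <= hi i.
Proof.
have := dG_le i; have := Hlh i; rewrite /sigma /nXp /nXm. lia.
Qed.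

Definition good_mate (m : node -> node) :=
  (forall v, inH v -> adjH v (m v) /\ m (m v) = v) /\ (forall v, ~~ inH v -> m v = v).

Lemma good_mate_inv m : good_mate m -> forall v, m (m v) = v.
Proof.
case=> H1 H2 v; case Hv: (inH v); first by case: (H1 v Hv).
by rewrite !H2 ?Hv.
Qed.

Lemma good_mate_inH m : good_mate m -> forall v, inH (m v) = inH v.
Proof.
move=> Hm v; case Hv: (inH v).
  by case: Hm => H1 _; case: (H1 v Hv) => /adjH_inr.
apply/negbTE/negP => Hmv; have := adjH_inr (proj1 (proj1 Hm _ Hmv)).
by rewrite good_mate_inv // Hv.
Qed.

Lemma set2_other (T : finType) (a b u w : T) :
  a != b -> u \in [set a; b] -> w \in [set a; b] -> w != u ->
  ([set a; b] = [set u; w]) /\ ((u == a) && (w == b) || (u == b) && (w == a)).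
Proof.
move=> Hab; rewrite !inE => /orP [] /eqP -> /orP [] /eqP -> //; rewrite ?eqxx //.
by rewrite orbT setUC.
Qed.

Section Cost.
Variable R : realFieldType.
Variable c : 'I_n -> 'I_n -> R.
Local Notation costH := (costH E' lo hi c).
Local Notation matching_cost := (matching_cost E' lo hi c).

Lemma cost_via_mate M m : perfect_matching E' lo hi M ->
  (forall e, e \in M -> forall u, u \in e -> e = [set u; m u] /\ u != m u) ->
  matching_cost M = (\sum_(u | inH u) costH u (m u) / 2)%R.
Proof.
move=> [H1 H2] H3.
have inHe e u : e \in M -> u \in e -> inH u.
  move=> He Hu; case: (H1 e He) => a [b [Hab Heab]]; move: Hu; rewrite Heab !inE.
  by case/orP=> /eqP ->; [apply: adjH_inl Hab | apply: adjH_inr Hab].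
rewrite /matching_cost.
have -> : (\sum_(e in M) edge_cost E' lo hi c e = \sum_(e in M) \sum_(u in e) costH u (m u) / 2)%R.
  apply: eq_bigr => e He; rewrite /edge_cost; apply: eq_bigr => u Hu.
  apply: big_pred1 => v /=; case: (H3 e He u Hu) => -> Hneq.
  rewrite !inE; apply/idP/idP.
    by case/andP=> /orP [/eqP ->|//]; rewrite eqxx.
  move/eqP ->; rewrite eqxx orbT /=; exact: Hneq.
have Htriv : trivIset M.
  apply/trivIsetP => A B HA HB HAB; apply/pred0P => x /=; apply/negbTE/negP => /andP [HxA HxB].
  have := H2 x (inHe A x HA HxA); move/eqP/cards1P => [e0 He0].
  have : A \in [set e in M | x \in e] by rewrite inE HA HxA.
  have : B \in [set e in M | x \in e] by rewrite inE HB HxB.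
  by rewrite He0 !inE => /eqP HB0 /eqP HA0; rewrite HA0 HB0 eqxx in HAB.
rewrite -(big_trivIset _ Htriv); apply: eq_bigl => u; apply/bigcupP/idP.
  by case=> e He Hu; apply: inHe He Hu.
move=> Hu; have := H2 u Hu; move/eqP/cards1P => [e0 He0].
have : e0 \in [set e in M | u \in e] by rewrite He0 set11.
by rewrite inE => /andP [He0M Hue0]; exists e0.
Qed.

Definition isYk (w : node) := if w is Some (t, _, _) then t == kY else false.
Definition phi (m : node -> node) (u : node) : R :=
  if u is Some (t, i, l) then (if (t == kY) && ~~ isYk (m u) then c i l / 2 else 0)%R else 0%R.

Lemma cost0_nY a b : ~~ isYk b -> cost0 c a b = 0%R.
Proof.
case: a => [[[t i] k]|] //; case: b => [[[s j] l]|] //=.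
by case: (ord5P s) => //=; rewrite andbF.
Qed.

Lemma cost0_Y a b : isYk a -> cost0 c a b = 0%R.
Proof.
case: a => [[[t i] k]|] //; case: b => [[[s j] l]|] //=.
by case: (ord5P t).
Qed.

Lemma isYkP w : isYk w -> exists j l, w = Yn j l.
Proof. by case: w => [[[t j] l]|] //= /eqP ->; exists j, l. Qed.

Lemma phi_nY m u : ~~ isYk u -> phi m u = 0%R.
Proof. by case: u => [[[t i] l]|] //= /negbTE ->. Qed.

Lemma costH_phi m u : good_mate m -> inH u -> costH u (m u) = (phi m u + phi m (m u))%R.
Proof.
move=> Hm Hu; have Hinv := good_mate_inv Hm.
have [Hadj _] := proj1 Hm u Hu.
rewrite /costH Hadj.
case Hwy: (isYk (m u)).
  have [j [l Hmu]] := isYkP Hwy.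
  have Hadj' : adjH (Yn j l) u by rewrite -Hmu adjHC.
  have Hmu' : m (Yn j l) = u by rewrite -Hmu Hinv.
  rewrite Hmu; case: (adj_Y Hadj') => [Hu'|[[k [Hu' _]]|[k [Hu' _]]]]; rewrite Hu' in Hmu Hmu' *.
  - by rewrite /phi /= ?Hmu ?Hmu' /=.
  - by rewrite /phi /= ?Hmu ?Hmu' /= eqxx addr0 add0r.
  - by rewrite /phi /= ?Hmu ?Hmu' /= eqxx addr0 add0r.
rewrite (cost0_nY _ (negbT Hwy)) add0r (phi_nY _ (negbT Hwy)) addr0.
case Huy: (isYk u).
  have [j [l Hu']] := isYkP Huy; subst u.
  case: (adj_Y Hadj) => [Hmu|[[k [Hmu _]]|[k [Hmu _]]]]; rewrite Hmu in Hwy *.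
  - by [].
  - by rewrite /phi /= Hmu /= eqxx.
  - by rewrite /phi /= Hmu /= eqxx.
by rewrite (cost0_nY _ (negbT Huy)) (phi_nY _ (negbT Huy)).
Qed.

Lemma half_double (x : R) : (x / 2 + x / 2 = x)%R.
Proof. by rewrite -splitr. Qed.

Lemma sum_cost_phi m : good_mate m ->
  (\sum_(u | inH u) costH u (m u) / 2 = \sum_(u | inH u) phi m u)%R.
Proof.
move=> Hm.
rewrite (eq_bigr (fun u => (phi m u + phi m (m u)) / 2)%R); last first.
  by move=> u Hu; rewrite costH_phi.
rewrite -big_distrl /= big_split /=.
have -> : (\sum_(u | inH u) phi m (m u) = \sum_(u | inH u) phi m u)%R.
  rewrite [RHS](reindex_inj (inv_inj (good_mate_inv Hm))) /=.
  by apply: eq_bigl => u; rewrite good_mate_inH.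
by rewrite mulrDl half_double.
Qed.

Lemma sum_phi_edit m (E : rel 'I_n) :
  (forall i l, ~~ isYk (m (Yn i l)) = (E i l != E' i l)) ->
  (forall i j, c i j = c j i) -> (forall i j, E i j = E j i) ->
  (\sum_(u | inH u) phi m u = edit_cost E' c E)%R.
Proof.
move=> HE Hc HEs; have HE's := proj1 E'sg.
pose A (i l : 'I_n) := (if (i < l)%N && (E i l != E' i l) then c i l else 0)%R.
rewrite big_mkcond /= sum_node /=.
have -> : (if inH None then phi m None else 0)%R = 0%R by case: (inH None).
rewrite add0r (bigD1 kY) //= [X in (_ + X)%R]big1 ?addr0; last first.
  move=> t Ht; apply: big1 => i _; apply: big1 => k _.
  by rewrite /phi (negbTE Ht) /=; case: ifP.
have -> : (\sum_(i < n) \sum_(k < n) (if inH (Some (kY, i, k)) then phi m (Some (kY, i, k)) else 0)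
   = \sum_(i < n) \sum_(l < n) (A i l / 2 + A l i / 2))%R.
  apply: eq_bigr => i _; apply: eq_bigr => l _.
  have := HE i l; rewrite /phi /A /= => ->.
  case: (ltngtP i l) => Hil.
  - rewrite neq_ltn Hil /= mul0r addr0; case: ifP => _; by rewrite ?mul0r.
  - rewrite neq_ltn Hil orbT /= mul0r add0r (HEs l i) (HE's l i) (Hc l i).
    case: ifP => _; by rewrite ?mul0r.
  - have -> : i = l by apply: val_inj.
    by rewrite eqxx /= mul0r addr0.
rewrite (eq_bigr (fun i => \sum_(l < n) A i l / 2 + \sum_(l < n) A l i / 2)%R); last first.
  by move=> i _; rewrite big_split.
rewrite big_split /= [X in (_ + X)%R]exchange_big /=.
have -> : (\sum_(i < n) \sum_(l < n) A i l / 2 = (\sum_(i < n) \sum_(l < n) A i l) / 2)%R.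
  rewrite big_distrl; apply: eq_bigr => i _; by rewrite big_distrl.
rewrite half_double.
rewrite /edit_cost; apply: eq_bigr => i _; by rewrite [RHS]big_mkcond.
Qed.

End Cost.

Lemma mate_of_matching M : perfect_matching E' lo hi M ->
  exists m, good_mate m /\ (forall e, e \in M -> forall u, u \in e -> e = [set u; m u] /\ u != m u).
Proof.
move=> [H1 H2].
pose m v := if inH v then (if [pick e in M | v \in e] is Some e then odflt v [pick w in e | w != v] else v) else v.
have key u e : inH u -> e \in M -> u \in e -> e = [set u; m u] /\ adjH u (m u).
  move=> Hu He Hue; rewrite /m Hu.
  have uniq1 e1 e2 : e1 \in M -> u \in e1 -> e2 \in M -> u \in e2 -> e1 = e2.
    move=> A1 B1 A2 B2; have := H2 u Hu; move/eqP/cards1P => [e0 He0].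
    have : e1 \in [set e in M | u \in e] by rewrite inE A1 B1.
    have : e2 \in [set e in M | u \in e] by rewrite inE A2 B2.
    by rewrite He0 !inE => /eqP -> /eqP ->.
  case: pickP => [e' /andP [He'M Hue'] | Hn]; last by have := Hn e; rewrite He Hue.
  rewrite (uniq1 e' e He'M Hue' He Hue).
  case: (H1 e He) => a [b [Hab Heab]].
  case: pickP => [w /andP [Hwe Hwu] | Hn] /=.
    rewrite Heab in Hue Hwe *; have [-> /orP Hc] := set2_other (adjH_neq Hab) Hue Hwe Hwu.
    split=> //; case: Hc => /andP [/eqP -> /eqP ->] //; by rewrite adjHC.
  exfalso; rewrite Heab !inE in Hue Hn; case/orP: Hue => /eqP Hu'.
    by have := Hn b; rewrite !inE eqxx orbT Hu' eq_sym (adjH_neq Hab).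
  by have := Hn a; rewrite !inE eqxx Hu' (adjH_neq Hab).
have ex_e u : inH u -> exists2 e, e \in M & u \in e.
  move=> Hu; have := H2 u Hu; move/eqP/cards1P => [e0 He0].
  have : e0 \in [set e in M | u \in e] by rewrite He0 set11.
  by rewrite inE => /andP [? ?]; exists e0.
have inHe e u : e \in M -> u \in e -> inH u.
  move=> He Hu; case: (H1 e He) => a [b [Hab Heab]]; move: Hu; rewrite Heab !inE.
  by case/orP=> /eqP ->; [apply: adjH_inl Hab | apply: adjH_inr Hab].
exists m; split; [split|].
- move=> v Hv; case: (ex_e v Hv) => e He Hve.
  have [Hev Hadj] := key v e Hv He Hve; split=> //.
  have Hw : m v \in e by rewrite Hev set22.
  have [Hew Hadj'] := key (m v) e (adjH_inr Hadj) He Hw.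
  have : m (m v) \in e by rewrite Hew set22.
  rewrite Hev !inE => /orP [/eqP //|/eqP Habs].
  by have := adjH_neq Hadj'; rewrite Habs eqxx.
- by move=> v /negbTE Hv; rewrite /m Hv.
- move=> e He u Hu; have [? Hadj] := key u e (inHe e u He Hu) He Hu.
  by split=> //; apply: adjH_neq.
Qed.

Lemma matching_of_mate m : good_mate m ->
  exists M, perfect_matching E' lo hi M /\
   (forall e, e \in M -> forall u, u \in e -> e = [set u; m u] /\ u != m u).
Proof.
move=> Hm; have Hinv := good_mate_inv Hm; have HinH := good_mate_inH Hm.
case: (Hm) => H1 H2.
exists [set [set v; m v] | v in [pred v | inH v]]; split; [split|].
- move=> e /imsetP [v Hv ->]; exists v, (m v); split=> //; by case: (H1 v Hv).
- move=> w Hw; apply/eqP/cards1P; exists [set w; m w]; apply/setP => e; rewrite !inE.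
  apply/andP/eqP.
    case=> /imsetP [v Hv ->]; rewrite !inE => /orP [/eqP ->//|/eqP Hwv].
    by rewrite Hwv Hinv setUC.
  move=> ->; split; last by rewrite set21.
  by apply/imsetP; exists w.
- move=> e /imsetP [v Hv ->] u; rewrite !inE => /orP [/eqP ->|/eqP ->].
    by split=> //; case: (H1 v Hv) => /adjH_neq.
  rewrite Hinv setUC; split=> //.
  have Hmv : inH (m v) by rewrite HinH.
  by case: (H1 _ Hmv) => /adjH_neq; rewrite Hinv.
Qed.

Definition rg t0 i (v : node) : bool :=
  if v is Some (t, j, _) then [&& t == t0, j == i & inH v] else false.

Lemma rg_cnt t0 i : \sum_(v : node) (rg t0 i v : nat) = \sum_(k < n) (inH (Some (t0, i, k)) : nat).
Proof.
rewrite (@sum_loc _ _ _ _ _ t0 i) /=; first by apply: eq_bigr => k _; rewrite /= !eqxx.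
move=> [[[t j] k]|] //= H; apply/eqP; rewrite eqb0; apply: contra H => /and3P [-> -> _] //.
Qed.

Lemma deg_sum m (E : rel 'I_m) i : deg E i = \sum_(l < m) (E i l : nat).
Proof.
rewrite /deg -sum1_card big_mkcond /=; apply: eq_bigr => l _; rewrite inE; by case: (E i l).
Qed.

Lemma nXp_le i : nXp i <= n.
Proof. have := dG_le i; rewrite /nXp; lia. Qed.
Lemma nXm_le i : nXm i <= n.
Proof. have := dG_le i; rewrite /nXm; lia. Qed.
Lemma nZp_le i : nZp i <= n.
Proof. have := sigma_bounds i; have := Hlh i; rewrite /nZp; lia. Qed.
Lemma nZm_le i : nZm i <= n.
Proof. have := sigma_bounds i; have := Hlh i; rewrite /nZm; lia. Qed.

Lemma cnt_Xp i : \sum_(v : node) (rg kXp i v : nat) = nXp i.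
Proof.
rewrite rg_cnt; transitivity (\sum_(k < n) (k < nXp i : nat)); first by [].
by rewrite sum_ord_lt; apply/minn_idPl; apply: nXp_le.
Qed.
Lemma cnt_Xm i : \sum_(v : node) (rg kXm i v : nat) = nXm i.
Proof.
rewrite rg_cnt; transitivity (\sum_(k < n) (k < nXm i : nat)); first by [].
by rewrite sum_ord_lt; apply/minn_idPl; apply: nXm_le.
Qed.
Lemma cnt_Zp i : \sum_(v : node) (rg kZp i v : nat) = nZp i.
Proof.
rewrite rg_cnt; transitivity (\sum_(k < n) (k < nZp i : nat)); first by [].
by rewrite sum_ord_lt; apply/minn_idPl; apply: nZp_le.
Qed.
Lemma cnt_Zm i : \sum_(v : node) (rg kZm i v : nat) = nZm i.
Proof.
rewrite rg_cnt; transitivity (\sum_(k < n) (k < nZm i : nat)); first by [].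
by rewrite sum_ord_lt; apply/minn_idPl; apply: nZm_le.
Qed.

Section Fwd.
Variable m : node -> node.
Hypothesis Hm : good_mate m.

Lemma mY j l : j != l ->
  m (Yn j l) = Yn l j \/ (exists k, m (Yn j l) = Xpn j k /\ ~~ E' j l /\ inH (Xpn j k)) \/
  (exists k, m (Yn j l) = Xmn j k /\ E' j l /\ inH (Xmn j k)).
Proof.
move=> Hjl; have [Hadj _] := proj1 Hm (Yn j l) Hjl; have Hin := adjH_inr Hadj.
case: (adj_Y Hadj) => [->|[[k [H1 H2]]|[k [H1 H2]]]]; [by left|right;left|right;right];
  by exists k; rewrite -H1.
Qed.

Lemma mYY j : m (Yn j j) = Yn j j.
Proof. by apply: (proj2 Hm); rewrite inH_Y eqxx. Qed.

Definition Ef i l := (i != l) && (isYk (m (Yn i l)) == E' i l).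

Lemma isYk_sym i l : isYk (m (Yn i l)) = isYk (m (Yn l i)).
Proof.
have Hinv := good_mate_inv Hm.
wlog suff: i l / isYk (m (Yn i l)) -> isYk (m (Yn l i)).
  by move=> H; apply/idP/idP; apply: H.
case: (eqVneq i l) => [->//|Hil].
case: (mY Hil) => [H|[[k [-> _]]|[k [-> _]]]] //= _.
by rewrite -H Hinv.
Qed.

Lemma Ef_simple : simple_graph Ef.
Proof.
case: E'sg => Hs Hirr; split; last by move=> i; rewrite /Ef eqxx.
by move=> i j; rewrite /Ef eq_sym isYk_sym Hs.
Qed.

Lemma Ef_HE i l : ~~ isYk (m (Yn i l)) = (Ef i l != E' i l).
Proof.
case: (eqVneq i l) => [<-|Hil].
  by rewrite mYY /Ef eqxx /= (negbTE (proj2 E'sg i)).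
by rewrite /Ef Hil /=; case: (isYk _); case: (E' i l).
Qed.

Lemma reidx (P Q : pred node) :
  \sum_(v : node) (P v && Q (m v) : nat) = \sum_(v : node) (Q v && P (m v) : nat).
Proof.
have Hinv := good_mate_inv Hm.
rewrite [RHS](reindex_inj (inv_inj Hinv)) /=; apply: eq_bigr => v _; by rewrite Hinv andbC.
Qed.

Lemma part3 (P A B C : pred node) :
  (forall v, P v -> (A (m v) : nat) + B (m v) + C (m v) = 1) ->
  \sum_(v : node) (P v : nat) =
  \sum_(v : node) (P v && A (m v) : nat) + \sum_(v : node) (P v && B (m v) : nat)
  + \sum_(v : node) (P v && C (m v) : nat).
Proof.
move=> H; rewrite -!big_split /=; apply: eq_bigr => v _.
by case HP: (P v) => //=; rewrite H.
Qed.

Lemma partXp i v : rg kXp i v -> (isYk (m v) : nat) + rg kXm i (m v) + rg kZp i (m v) = 1.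
Proof.
case: v => [[[t j] k]|] //= /and3P [/eqP -> /eqP -> Hin].
have [Hadj _] := proj1 Hm (Xpn i k) Hin; have Hin' := adjH_inr Hadj.
case: (adj_Xp Hadj) => [[l [H _]]|[[k' H]|[k' H]]]; rewrite H in Hin' *.
all: rewrite /= ?eqxx /=; try by [].
all: by move: Hin'; rewrite /= => ->.
Qed.

Lemma partXm i v : rg kXm i v -> (isYk (m v) : nat) + rg kXp i (m v) + rg kZm i (m v) = 1.
Proof.
case: v => [[[t j] k]|] //= /and3P [/eqP -> /eqP -> Hin].
have [Hadj _] := proj1 Hm (Xmn i k) Hin; have Hin' := adjH_inr Hadj.
case: (adj_Xm Hadj) => [[l [H _]]|[[k' H]|[k' H]]]; rewrite H in Hin' *.
all: rewrite /= ?eqxx /=; try by [].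
all: by move: Hin'; rewrite /= => ->.
Qed.

Lemma cntY t0 i (Q : bool -> bool) : t0 = kXp /\ Q = negb \/ t0 = kXm /\ Q = id ->
  \sum_(v : node) (rg t0 i v && isYk (m v) : nat) =
  \sum_(l < n) ((i != l) && Q (E' i l) && ~~ isYk (m (Yn i l)) : nat).
Proof.
move=> HtQ.
rewrite reidx (@sum_loc _ _ _ _ _ kY i) /=.
  apply: eq_bigr => l _; rewrite ?eqxx /=.
  case: (eqVneq i l) => [<-|Hil].
    by rewrite mYY /=; case: HtQ => [[-> HQ]|[-> HQ]]; rewrite ?HQ /= ?andbF.
  case: (mY Hil) => [->|[[k [-> [HE Hin]]]|[k [-> [HE Hin]]]]] /=; rewrite ?andbF //.
  - by case: HtQ => [[-> HQ]|[-> HQ]]; rewrite ?HQ /= ?andbF.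
  - case: HtQ => [[-> HQ]|[-> HQ]]; rewrite ?HQ /= ?eqxx /= ?andbF ?HE ?(negbTE HE) //.
    by move: Hin; rewrite /= => ->.
  - case: HtQ => [[-> HQ]|[-> HQ]]; rewrite ?HQ /= ?eqxx /= ?andbF ?HE //.
    by move: Hin; rewrite /= => ->.
move=> [[[t j] l]|] //=.
case: (ord5P t) => //= Hj; rewrite ?eqxx /= in Hj.
apply/eqP; rewrite eqb0.
case: (eqVneq j l) => [<-|Hjl].
  by rewrite mYY /=; case: HtQ => [[-> HQ]|[-> HQ]]; rewrite ?HQ /= ?andbF.
case: (mY Hjl) => [->|[[k [-> _]]|[k [-> _]]]] /=.
- by case: HtQ => [[-> HQ]|[-> HQ]]; rewrite ?HQ /= ?andbF.
- by case: HtQ => [[-> _]|[-> _]] /=; rewrite ?(negbTE Hj) ?andbF.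
- by case: HtQ => [[-> _]|[-> _]] /=; rewrite ?(negbTE Hj) ?andbF.
Qed.

Lemma deg_bounds i : lo i <= deg (Ef) i <= hi i.
Proof.
have pXp := part3 (partXp (i:=i)); rewrite cnt_Xp in pXp.
have pXm := part3 (partXm (i:=i)); rewrite cnt_Xm in pXm.
rewrite (@cntY kXp i negb) in pXp; last by left.
rewrite (@cntY kXm i id) in pXm; last by right.
have eX := reidx (rg kXp i) (rg kXm i).
have eZp := reidx (rg kXp i) (rg kZp i).
have eZm := reidx (rg kXm i) (rg kZm i).
have lZp : \sum_(v : node) (rg kZp i v && rg kXp i (m v) : nat) <= nZp i.
  rewrite -cnt_Zp; apply: leq_sum => v _; by case: (rg kZp i v); case: (rg kXp i (m v)).
have lZm : \sum_(v : node) (rg kZm i v && rg kXm i (m v) : nat) <= nZm i.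
  rewrite -cnt_Zm; apply: leq_sum => v _; by case: (rg kZm i v); case: (rg kXm i (m v)).
have hdeg : deg Ef i = \sum_(l < n) ((i != l) && E' i l && isYk (m (Yn i l)) : nat)
                    + \sum_(l < n) ((i != l) && negb (E' i l) && ~~ isYk (m (Yn i l)) : nat).
  rewrite deg_sum -big_split /=; apply: eq_bigr => l _; rewrite /Ef.
  by case: (i != l); case: (E' i l); case: (isYk _).
have hd : dG E' i = \sum_(l < n) ((i != l) && E' i l && isYk (m (Yn i l)) : nat)
                    + \sum_(l < n) ((i != l) && id (E' i l) && ~~ isYk (m (Yn i l)) : nat).
  rewrite /dG deg_sum -big_split /=; apply: eq_bigr => l _.
  case: (eqVneq i l) => [<-|Hil]; first by rewrite (negbTE (proj2 E'sg i)).
  by case: (E' i l); case: (isYk _).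
have := sigma_bounds i; have := Hlh i; move: hdeg hd pXp pXm eX eZp eZm lZp lZm.
rewrite /nZp /nZm /sigma /nXm /=.
set e := \sum_(l < n) ((i != l) && E' i l && isYk (m (Yn i l)) : nat).
set a := \sum_(l < n) ((i != l) && E' i l && ~~ isYk (m (Yn i l)) : nat).
set b := \sum_(l < n) ((i != l) && ~~ E' i l && ~~ isYk (m (Yn i l)) : nat).
set X1 := \sum_(v : node) (rg kXp i v && rg kXm i (m v) : nat).
set X2 := \sum_(v : node) (rg kXm i v && rg kXp i (m v) : nat).
set p1 := \sum_(v : node) (rg kXp i v && rg kZp i (m v) : nat).
set p2 := \sum_(v : node) (rg kZp i v && rg kXp i (m v) : nat).
set q1 := \sum_(v : node) (rg kXm i v && rg kZm i (m v) : nat).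
set q2 := \sum_(v : node) (rg kZm i v && rg kXm i (m v) : nat).
lia.
Qed.

End Fwd.

Section Bwd.
Variable E : rel 'I_n.
Hypothesis Esg : simple_graph E.
Hypothesis Edeg : forall i, lo i <= deg E i <= hi i.

Definition Rm i := [seq l <- enum 'I_n | E' i l && ~~ E i l].
Definition Ad i := [seq l <- enum 'I_n | ~~ E' i l && E i l].
Definition aa i := size (Rm i).
Definition bb i := size (Ad i).
Definition mm i := minn (nXp i - bb i) (nXm i - aa i).
Definition pp i := nXp i - bb i - mm i.
Definition qq i := nXm i - aa i - mm i.

Lemma sum_neq i : \sum_(l < n) (i != l : nat) = n.-1.
Proof.
have := deg_sum (fun i l : 'I_n => i != l) i; rewrite /deg => <-.
have -> : [set j | i != j] = [set~ i] by apply/setP => j; rewrite !inE eq_sym.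
by rewrite cardsC1 card_ord.
Qed.

Lemma ab_facts i : [/\ aa i <= nXm i, bb i <= nXp i, pp i <= nZp i & qq i <= nZm i].
Proof.
have [HEs HEi] := Esg; have [HE's HE'i] := E'sg.
have ha : aa i = \sum_(l < n) (E' i l && ~~ E i l : nat) by rewrite /aa /Rm size_filter_sum.
have hb : bb i = \sum_(l < n) (~~ E' i l && E i l : nat) by rewrite /bb /Ad size_filter_sum.
have hdeg := deg_sum E i. have hd : dG E' i = \sum_(l < n) (E' i l : nat) by rewrite /dG deg_sum.
have hN := sum_neq i.
have e1 : deg E i + aa i = dG E' i + bb i.
  rewrite hdeg hd ha hb -!big_split /=; apply: eq_bigr => l _.
  by case: (E i l); case: (E' i l).
have e2 : n.-1 = deg E i + \sum_(l < n) ((i != l) && ~~ E i l : nat).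
  rewrite -hN hdeg -big_split /=; apply: eq_bigr => l _.
  case: (eqVneq i l) => [<-|_]; first by rewrite (negbTE (HEi i)).
  by case: (E i l).
have e3 : n.-1 = dG E' i + \sum_(l < n) ((i != l) && ~~ E' i l : nat).
  rewrite -hN hd -big_split /=; apply: eq_bigr => l _.
  case: (eqVneq i l) => [<-|_]; first by rewrite (negbTE (HE'i i)).
  by case: (E' i l).
have l1 : aa i <= \sum_(l < n) ((i != l) && ~~ E i l : nat).
  rewrite ha; apply: leq_sum => l _.
  case: (eqVneq i l) => [<-|_]; first by rewrite (negbTE (HE'i i)).
  by case: (E i l); case: (E' i l).
have l2 : bb i <= \sum_(l < n) ((i != l) && ~~ E' i l : nat).
  rewrite hb; apply: leq_sum => l _.
  case: (eqVneq i l) => [<-|_]; first by rewrite (negbTE (HEi i)) andbF.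
  by case: (E i l); case: (E' i l).
have l3 : bb i <= deg E i.
  rewrite hb hdeg; apply: leq_sum => l _; by case: (E i l); case: (E' i l).
have l4 : aa i <= dG E' i.
  rewrite ha hd; apply: leq_sum => l _; by case: (E i l); case: (E' i l).
have := Edeg i; have := Hlh i; have := sigma_bounds i.
rewrite /pp /qq /mm /nZp /nZm /sigma /nXp /nXm.
move: e1 e2 e3 l1 l2 l3 l4.
set S1 := \sum_(l < n) ((i != l) && ~~ E i l : nat).
set S2 := \sum_(l < n) ((i != l) && ~~ E' i l : nat).
move=> *; split; lia.
Qed.

Definition mk (t : 'I_5) (i : 'I_n) (k : nat) : node := Some (t, i, insubd i k).
Lemma mk_val t i k : k < n -> exists k' : 'I_n, mk t i k = Some (t, i, k') /\ val k' = k.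
Proof. move=> Hk; exists (insubd i k); split => //; by rewrite val_insubd Hk. Qed.
Lemma mk_valK t i (k : 'I_n) : mk t i k = Some (t, i, k).
Proof. by rewrite /mk valKd. Qed.

Definition mate0 (v : node) : node :=
  match v with
  | Some (t, i, k) =>
    if t == kY then
      if E i k == E' i k then Yn k i
      else if E' i k then mk kXm i (index k (Rm i)) else mk kXp i (index k (Ad i))
    else if t == kXp then
      if k < bb i then Yn i (nth i (Ad i) k)
      else if k < bb i + mm i then mk kXm i (k - bb i + aa i)
      else mk kZp i (k - bb i - mm i)
    else if t == kXm then
      if k < aa i then Yn i (nth i (Rm i) k)
      else if k < aa i + mm i then mk kXp i (k - aa i + bb i)
      else mk kZm i (k - aa i - mm i)
    else if t == kZp then mk kXp i (k + bb i + mm i)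
    else mk kXm i (k + aa i + mm i)
  | None => None
  end.

Lemma mate0_Y i l : mate0 (Yn i l) = if E i l == E' i l then Yn l i
      else if E' i l then mk kXm i (index l (Rm i)) else mk kXp i (index l (Ad i)).
Proof. by []. Qed.
Lemma mate0_Xp i (k : 'I_n) : mate0 (Xpn i k) =
      if k < bb i then Yn i (nth i (Ad i) k)
      else if k < bb i + mm i then mk kXm i (k - bb i + aa i)
      else mk kZp i (k - bb i - mm i).
Proof. by []. Qed.
Lemma mate0_Xm i (k : 'I_n) : mate0 (Xmn i k) =
      if k < aa i then Yn i (nth i (Rm i) k)
      else if k < aa i + mm i then mk kXp i (k - aa i + bb i)
      else mk kZm i (k - aa i - mm i).
Proof. by []. Qed.
Lemma mate0_Zp i (k : 'I_n) : mate0 (Zpn i k) = mk kXp i (k + bb i + mm i).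
Proof. by []. Qed.
Lemma mate0_Zm i (k : 'I_n) : mate0 (Zmn i k) = mk kXm i (k + aa i + mm i).
Proof. by []. Qed.

Definition isW (v : node) : bool :=
  if v is Some (t, i, k) then ((t == kZp) && (pp i <= k)) || ((t == kZm) && (qq i <= k)) else true.
Definition H0 (v : node) := inH v && ~~ isW v.

Lemma H0_Y i l : H0 (Yn i l) = (i != l). Proof. by rewrite /H0 /= andbT. Qed.
Lemma H0_Xp i k : H0 (Xpn i k) = (k < nXp i). Proof. by rewrite /H0 /= andbT. Qed.
Lemma H0_Xm i k : H0 (Xmn i k) = (k < nXm i). Proof. by rewrite /H0 /= andbT. Qed.
Lemma H0_Zp i k : H0 (Zpn i k) = (k < nZp i) && (k < pp i).
Proof. by rewrite /H0 /= ?orbF -ltnNge. Qed.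
Lemma H0_Zm i k : H0 (Zmn i k) = (k < nZm i) && (k < qq i).
Proof. by rewrite /H0 /= ?orbF -ltnNge. Qed.

Lemma adjH_YY i k : i != k -> adjH (Yn i k) (Yn k i).
Proof.
move=> Hik; rewrite /adjH /= Hik eq_sym Hik /= !eqxx /= andbT.
by apply/eqP => [[/eqP]]; rewrite (negbTE Hik).
Qed.
Lemma adjH_XpY i (k l : 'I_n) : k < nXp i -> i != l -> ~~ E' i l -> adjH (Xpn i k) (Yn i l).
Proof. by move=> H1 H2 H3; rewrite /adjH /= H1 H2 H3 !eqxx. Qed.
Lemma adjH_XmY i (k l : 'I_n) : k < nXm i -> i != l -> E' i l -> adjH (Xmn i k) (Yn i l).
Proof. by move=> H1 H2 H3; rewrite /adjH /= H1 H2 H3 !eqxx. Qed.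
Lemma adjH_XpXm i (k k' : 'I_n) : k < nXp i -> k' < nXm i -> adjH (Xpn i k) (Xmn i k').
Proof. by move=> H1 H2; rewrite /adjH /= H1 H2 !eqxx. Qed.
Lemma adjH_ZpXp i (k k' : 'I_n) : k < nZp i -> k' < nXp i -> adjH (Zpn i k) (Xpn i k').
Proof. by move=> H1 H2; rewrite /adjH /= H1 H2 !eqxx. Qed.
Lemma adjH_ZmXm i (k k' : 'I_n) : k < nZm i -> k' < nXm i -> adjH (Zmn i k) (Xmn i k').
Proof. by move=> H1 H2; rewrite /adjH /= H1 H2 !eqxx. Qed.

Lemma mate0_ok v : H0 v -> [/\ H0 (mate0 v), mate0 (mate0 v) = v & adjH v (mate0 v)].
Proof.
have [HEs HEi] := Esg; have [HE's HE'i] := E'sg.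
case: v => [[[t i] k]|]; last by rewrite /H0 /= andbF.
have [Ha Hb Hp Hq] := ab_facts i.
have Hxm := nXm_le i; have Hxp := nXp_le i; have Hzp := nZp_le i; have Hzm := nZm_le i.
have Hmm : mm i <= nXp i - bb i /\ mm i <= nXm i - aa i by rewrite /mm; split; lia.
have Hpp : pp i = nXp i - bb i - mm i by [].
have Hqq : qq i = nXm i - aa i - mm i by [].
case: (ord5P t).
-
  rewrite -/(Yn i k) H0_Y => Hik; rewrite mate0_Y.
  case: eqP => HEE.
    rewrite H0_Y eq_sym Hik mate0_Y HEs HE's HEE eqxx; split=> //; exact: adjH_YY.
  case HE'k: (E' i k).
    have HEk : E i k = false by move: HEE; rewrite HE'k; case: (E i k).
    have Hin : k \in Rm i by rewrite mem_filter mem_enum HE'k HEk.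
    have Hr : index k (Rm i) < aa i by rewrite index_mem.
    have [k' [-> Hk']] := mk_val kXm i (leq_trans Hr (leq_trans Ha Hxm)).
    rewrite -/(Xmn i k') H0_Xm Hk' (leq_trans Hr Ha) mate0_Xm Hk' Hr nth_index //.
    by split=> //; rewrite adjHC; apply: adjH_XmY => //; rewrite Hk' (leq_trans Hr Ha).
  have HEk : E i k = true by move: HEE; rewrite HE'k; case: (E i k).
  have Hin : k \in Ad i by rewrite mem_filter mem_enum HE'k HEk.
  have Hr : index k (Ad i) < bb i by rewrite index_mem.
  have [k' [-> Hk']] := mk_val kXp i (leq_trans Hr (leq_trans Hb Hxp)).
  rewrite -/(Xpn i k') H0_Xp Hk' (leq_trans Hr Hb) mate0_Xp Hk' Hr nth_index //.
  by split=> //; rewrite adjHC; apply: adjH_XpY => //; [rewrite Hk' (leq_trans Hr Hb)|rewrite HE'k].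
-
  rewrite -/(Xpn i k) H0_Xp => Hk; rewrite mate0_Xp.
  case: (ltnP k (bb i)) => H1.
    have Hl : nth i (Ad i) k \in Ad i by apply: mem_nth.
    move: Hl; set l := nth i (Ad i) k; rewrite mem_filter mem_enum andbT => /andP [HE'l HEl].
    have Hil : i != l by apply/eqP => Hil; move: HEl; rewrite -Hil (negbTE (HEi i)).
    rewrite H0_Y Hil mate0_Y HEl (negbTE HE'l) /= index_uniq //; last exact: filter_uniq (enum_uniq _).
    by rewrite mk_valK; split=> //; apply: adjH_XpY.
  case: (ltnP k (bb i + mm i)) => H2.
    have Hr : k - bb i + aa i < nXm i by lia.
    have [k' [-> Hk']] := mk_val kXm i (leq_trans Hr Hxm).
    rewrite -/(Xmn i k') H0_Xm Hk' Hr mate0_Xm Hk'.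
    have -> : (k - bb i + aa i < aa i) = false by lia.
    have -> : (k - bb i + aa i < aa i + mm i) = true by lia.
    have -> : k - bb i + aa i - aa i + bb i = k by lia.
    by rewrite mk_valK; split=> //; apply: adjH_XpXm => //; rewrite Hk'.
  have Hr : k - bb i - mm i < pp i by lia.
  have [k' [-> Hk']] := mk_val kZp i (leq_trans Hr (leq_trans Hp Hzp)).
  rewrite -/(Zpn i k') H0_Zp Hk' Hr (leq_trans Hr Hp) mate0_Zp Hk'.
  have -> : k - bb i - mm i + bb i + mm i = k by lia.
  by rewrite mk_valK; split=> //; rewrite adjHC; apply: adjH_ZpXp => //; rewrite Hk' (leq_trans Hr Hp).
-
  rewrite -/(Xmn i k) H0_Xm => Hk; rewrite mate0_Xm.
  case: (ltnP k (aa i)) => H1.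
    have Hl : nth i (Rm i) k \in Rm i by apply: mem_nth.
    move: Hl; set l := nth i (Rm i) k; rewrite mem_filter mem_enum andbT => /andP [HE'l HEl].
    have Hil : i != l by apply/eqP => Hil; move: HE'l; rewrite -Hil (negbTE (HE'i i)).
    rewrite H0_Y Hil mate0_Y (negbTE HEl) HE'l /= index_uniq //; last exact: filter_uniq (enum_uniq _).
    by rewrite mk_valK; split=> //; apply: adjH_XmY.
  case: (ltnP k (aa i + mm i)) => H2.
    have Hr : k - aa i + bb i < nXp i by lia.
    have [k' [-> Hk']] := mk_val kXp i (leq_trans Hr Hxp).
    rewrite -/(Xpn i k') H0_Xp Hk' Hr mate0_Xp Hk'.
    have -> : (k - aa i + bb i < bb i) = false by lia.
    have -> : (k - aa i + bb i < bb i + mm i) = true by lia.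
    have -> : k - aa i + bb i - bb i + aa i = k by lia.
    by rewrite mk_valK; split=> //; rewrite adjHC; apply: adjH_XpXm => //; rewrite Hk'.
  have Hr : k - aa i - mm i < qq i by lia.
  have [k' [-> Hk']] := mk_val kZm i (leq_trans Hr (leq_trans Hq Hzm)).
  rewrite -/(Zmn i k') H0_Zm Hk' Hr (leq_trans Hr Hq) mate0_Zm Hk'.
  have -> : k - aa i - mm i + aa i + mm i = k by lia.
  by rewrite mk_valK; split=> //; rewrite adjHC; apply: adjH_ZmXm => //; rewrite Hk' (leq_trans Hr Hq).
-
  rewrite -/(Zpn i k) H0_Zp => /andP [Hk1 Hk2]; rewrite mate0_Zp.
  have Hr : k + bb i + mm i < nXp i by lia.
  have [k' [-> Hk']] := mk_val kXp i (leq_trans Hr Hxp).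
  rewrite -/(Xpn i k') H0_Xp Hk' Hr mate0_Xp Hk'.
  have -> : (k + bb i + mm i < bb i) = false by lia.
  have -> : (k + bb i + mm i < bb i + mm i) = false by lia.
  have -> : k + bb i + mm i - bb i - mm i = k by lia.
  by rewrite mk_valK; split=> //; apply: adjH_ZpXp => //; rewrite Hk'.
-
  rewrite -/(Zmn i k) H0_Zm => /andP [Hk1 Hk2]; rewrite mate0_Zm.
  have Hr : k + aa i + mm i < nXm i by lia.
  have [k' [-> Hk']] := mk_val kXm i (leq_trans Hr Hxm).
  rewrite -/(Xmn i k') H0_Xm Hk' Hr mate0_Xm Hk'.
  have -> : (k + aa i + mm i < aa i) = false by lia.
  have -> : (k + aa i + mm i < aa i + mm i) = false by lia.
  have -> : k + aa i + mm i - aa i - mm i = k by lia.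
  by rewrite mk_valK; split=> //; apply: adjH_ZmXm => //; rewrite Hk'.
Qed.

Definition Wl := enum [pred v : node | inH v && isW v].
Definition mateW (v : node) := nth v Wl (pidx (index v Wl)).
Definition mateF (v : node) := if inH v && isW v then mateW v else if inH v then mate0 v else v.

Lemma inH_even : ~~ odd (\sum_(v : node) (inH v : nat)).
Proof.
rewrite sum_opt.
have e : \sum_(x : 'I_5 * 'I_n * 'I_n) (inH (Some x) : nat) =
         \sum_(x : 'I_5 * 'I_n * 'I_n) (base E' lo hi (Some x) : nat) by [].
rewrite e; change (inH None) with (hatz E' lo hi).
have -> : hatz E' lo hi = odd (\sum_(x : 'I_5 * 'I_n * 'I_n) (base E' lo hi (Some x) : nat)).
  by rewrite /hatz card_sum' sum_opt.
by rewrite oddD oddb addbb.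
Qed.

Lemma Wl_even : ~~ odd (size Wl).
Proof.
rewrite /Wl -cardE card_sum'.
have H0e : ~~ odd (\sum_(v : node) (H0 v : nat)).
  rewrite -card_sum; apply: (@even_inv _ mate0) => x; rewrite inE => Hx.
  have [H1 H2 H3] := mate0_ok Hx; rewrite inE; split=> //; split=> //.
  by rewrite eq_sym; apply: adjH_neq.
have Hs : \sum_(v : node) (inH v : nat) = \sum_(v : node) (inH v && isW v : nat) + \sum_(v : node) (H0 v : nat).
  rewrite -big_split /=; apply: eq_bigr => v _; rewrite /H0; by case: (inH v); case: (isW v).
have := inH_even; rewrite Hs oddD; move: H0e; by case: (odd _); case: (odd _).
Qed.

Lemma W_adj u w : isW u -> isW w -> u != w -> adj0 u w || adj0 w u.
Proof.
case: u => [[[t i] k]|]; case: w => [[[s j] l]|] //=.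
- case: (ord5P t) => //= _; case: (ord5P s) => //= _ _; by rewrite !orbT.
- by case: (ord5P t) => //= _; rewrite orbT.
- by case: (ord5P s).
Qed.

Lemma mateF_good : good_mate mateF.
Proof.
have Hu : uniq Wl by apply: enum_uniq.
have Hev := Wl_even.
have inWl v : (v \in Wl) = inH v && isW v by rewrite /Wl mem_enum.
split; last by move=> v /negbTE Hv; rewrite /mateF Hv.
move=> v Hv; rewrite /mateF Hv /=.
case HW: (isW v) => /=.
  have Hvin : v \in Wl by rewrite inWl Hv HW.
  have [Hy Hneq Hback] := pair_seq Hu Hev Hvin.
  rewrite /mateW; move: Hy Hneq Hback; set y := nth v Wl _ => Hy Hneq Hback.
  rewrite inWl in Hy; case/andP: Hy => Hy1 Hy2; rewrite Hy1 Hy2 /=.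
  split=> //; rewrite /adjH Hv Hy1 eq_sym Hneq /=; apply: W_adj => //.
  by rewrite eq_sym.
have HH0 : H0 v by rewrite /H0 Hv HW.
have [H1 H2 H3] := mate0_ok HH0.
move: H1; rewrite /H0 => /andP [H1a H1b]; rewrite H1a (negbTE H1b) /= H2.
by split.
Qed.

Lemma mateF_HE i l : ~~ isYk (mateF (Yn i l)) = (E i l != E' i l).
Proof.
case: (eqVneq i l) => [<-|Hil].
  rewrite /mateF /= eqxx /= (negbTE (proj2 Esg i)) (negbTE (proj2 E'sg i)) //.
rewrite /mateF inH_Y Hil /=.
by case: eqP => [HEE|HEE] //=; case: (E' i l).
Qed.

End Bwd.

End S.

Unset Implicit Arguments.
Set Strict Implicit.

Theorem theorem4p1 (R : realFieldType) (n : nat) (E' : rel 'I_n)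
    (c : 'I_n -> 'I_n -> R) (B : R) (lo hi : 'I_n -> nat) :
  simple_graph E' ->
  (forall i j, c i j = c j i) ->
  (forall i j, i != j -> (0 <= c i j)%R) ->
  (0 <= B)%R ->
  (forall i, lo i <= hi i <= n.-1) ->
  (exists M : {set {set node n}},
      perfect_matching E' lo hi M /\ (matching_cost E' lo hi c M <= B)%R)
  <->
  (exists E : rel 'I_n,
      simple_graph E /\ (edit_cost E' c E <= B)%R /\
      forall i, lo i <= deg E i <= hi i).
Proof.
move=> HE' Hc _ _ Hlh; split.
- case=> M [HM Hcost].
  have [m [Hm Hedge]] := @mate_of_matching n E' lo hi M HM.
  have HEf := @Ef_simple n E' lo hi HE' m Hm.
  exists (Ef E' m); split => //; split; last exact: (@deg_bounds n E' lo hi HE' Hlh m Hm).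
  rewrite -(@sum_phi_edit n E' lo hi HE' R c m (Ef E' m) (@Ef_HE n E' lo hi HE' m Hm) Hc (proj1 HEf)).
  by rewrite -(@sum_cost_phi n E' lo hi R c m Hm) -(@cost_via_mate n E' lo hi R c M m HM Hedge).
- case=> E [HEsg [Hcost Hdeg]].
  have Hm := @mateF_good n E' lo hi HE' Hlh E HEsg Hdeg.
  have [M [HM Hedge]] := @matching_of_mate n E' lo hi _ Hm.
  exists M; split => //.
  rewrite (@cost_via_mate n E' lo hi R c M _ HM Hedge) (@sum_cost_phi n E' lo hi R c _ Hm).
  by rewrite (@sum_phi_edit n E' lo hi HE' R c _ E (@mateF_HE n E' lo hi HE' E HEsg) Hc (proj1 HEsg)).
Qed.
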